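(* Let $\mathbf{X}\in\mathbb{R}^{d\times n}$, $\mathbf{W}^\star\in\mathbb{R}^{m\times d}$ and $\mathbf{Y}=\mathbf{W}^\star\mathbf{X}\in\mathbb{R}^{m\times n}$. Let $p=\operatorname{rank}(\mathbf{Y})$ and let $\sigma_1^\star\ge\sigma_2^\star\ge\dots\ge\sigma_p^\star>0$ be the nonzero singular values of $\mathbf{Y}$, with $\sigma_k^\star:=0$ for $k>p$. Let $1\le r\le p$ and let $\{(\mathbf{a}_k,\mathbf{b}_k)\}_{k=1}^r$ be the output of the Inexact Sequential Low-Rank procedure (described in the context) applied to $(\mathbf{X},\mathbf{Y})$ with target rank $r$, and let $\bm{\delta}_k$ be the corresponding numerical errors, with $\|\bm{\delta}_k\|_F>0$ for $k=1,\dots,r$ and the convention $\|\bm{\delta}_0\|_F:=0$. For $1\le k\le r$ define $$\mathcal{T}_k^\star:=\min\Big\{\min_{k<j\le p}|\sigma_k^\star-\sigma_j^\star|,\ \sigma_k^\star\Big\},\qquad E(k):=\sigma_{\max}(\mathbf{X})\sum_{k'=0}^{k-1}\|\bm{\delta}_{k'}\|_F\prod_{j=k'+1}^{k-1}\Big(2+\frac{6\sigma_j^\star}{\mathcal{T}_k^\star}\Big).$$ If $E(k)<\tfrac12\min_{k<j\le p}|\sigma_k^\star-\sigma_j^\star|$ for every $k\in\{1,\dots,r\}$, then $$\Big\|\mathbf{Y}-\sum_{k=1}^r\mathbf{b}_k\mathbf{a}_k^\top\mathbf{X}\Big\|_F\le\sum_{k=r+1}^{p}\sigma_k^\star+\s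igma_{\max}(\mathbf{X})\sum_{k=1}^{r}\sum_{k'=0}^{k}\|\bm{\delta}_{k'}\|_F\prod_{j=k'+1}^{k}\Big(2+\frac{6\sigma_j^\star}{\mathcal{T}_k^\star}\Big).$$
   Context: $\sigma_{\max}(\mathbf{X})$ is the largest singular value of $\mathbf{X}$; $\|\cdot\|_F$ is the Frobenius norm. Inexact Sequential Low-Rank procedure: set $\mathbf{Y}_1:=\mathbf{Y}$; for $k=1,\dots,r$, obtain vectors $\mathbf{a}_k\in\mathbb{R}^d,\mathbf{b}_k\in\mathbb{R}^m$ from an arbitrary (approximate) rank-1 solver applied to $(\mathbf{Y}_k,\mathbf{X})$, and set $\mathbf{Y}_{k+1}:=\mathbf{Y}_k-\mathbf{b}_k\mathbf{a}_k^\top\mathbf{X}$. Numerical error: for each $k$, let $(\overline{\mathbf{a}}_k,\overline{\mathbf{b}}_k)\in\arg\min_{\mathbf{a}\in\mathbb{R}^d,\mathbf{b}\in\mathbb{R}^m}\tfrac12\|\mathbf{Y}_k-\mathbf{b}\mathbf{a}^\top\mathbf{X}\|_F^2$ be an exact minimizer, and $\bm{\delta}_k:=\mathbf{b}_k\mathbf{a}_k^\top-\overline{\mathbf{b}}_k\overline{\mathbf{a}}_k^\top\in\mathbb{R}^{m\times d}$. *)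

(* Defs.v *)
From HB Require Import structures.
From mathcomp Require Import all_boot all_order all_algebra.
From mathcomp Require Import reals.
Set Implicit Arguments. Unset Strict Implicit. Unset Printing Implicit Defensive.
Import Order.TTheory GRing.Theory Num.Theory.
Local Open Scope ring_scope.

Section Defs.
Variable R : realType.

Definition frob (m n : nat) (A : 'M[R]_(m, n)) : R :=
  Num.sqrt (\sum_(i < m) \sum_(j < n) A i j ^+ 2).

(* [svals A s]: s 1 >= s 2 >= ... >= 0 are the singular values of A
   (1-indexed, s k = 0 for k > min m n; s 0 is unused), i.e. there is an SVD
   A = U diag(s) V^T with U, V orthogonal. *)
Definition svals (m n : nat) (A : 'M[R]_(m, n)) (s : nat -> R) : Prop :=
  exists (U : 'M[R]_m) (V : 'M[R]_n),
    [/\ U^T *m U = 1%:M, V^T *m V = 1%:M &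
        A = U *m (\matrix_(i < m, j < n) (if (i : nat) == j then s i.+1 else 0))
              *m V^T] /\
    [/\ (forall k, 0 <= s k.+1),
        (forall k, s k.+2 <= s k.+1)
      & (forall k, (minn m n < k)%N -> s k = 0)].

(* Residuals of the sequential procedure: resid k = Y_{k+1}
   (Y_1 = Y, Y_{k+1} = Y_k - b_k a_k^T X). Vectors a, b are 1-indexed. *)
Fixpoint resid (m d n : nat) (Y : 'M[R]_(m, n)) (X : 'M[R]_(d, n))
    (a : nat -> 'cV[R]_d) (b : nat -> 'cV[R]_m) (k : nat) : 'M[R]_(m, n) :=
  match k with
  | 0 => Y
  | k'.+1 => resid Y X a b k' - b k'.+1 *m (a k'.+1)^T *m X
  end.

Definition rank1_argmin (m d n : nat) (Yk : 'M[R]_(m, n)) (X : 'M[R]_(d, n))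
    (a : 'cV[R]_d) (b : 'cV[R]_m) : Prop :=
  forall (a' : 'cV[R]_d) (b' : 'cV[R]_m),
    2^-1 * frob (Yk - b *m a^T *m X) ^+ 2 <= 2^-1 * frob (Yk - b' *m a'^T *m X) ^+ 2.

Definition delta_norm (m d : nat) (a abar : nat -> 'cV[R]_d)
    (b bbar : nat -> 'cV[R]_m) (k : nat) : R :=
  if k == 0%N then 0
  else frob (b k *m (a k)^T - bbar k *m (abar k)^T).

Definition Tstar (s : nat -> R) (p k : nat) : R :=
  \big[Num.min/s k]_(k.+1 <= j < p.+1) `|s k - s j|.

Definition err_sum (dn : nat -> R) (s : nat -> R) (T : R) (K : nat) : R :=
  \sum_(0 <= k' < K) dn k' * \prod_(k'.+1 <= j < K) (2 + 6 * s j / T).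

End Defs.

(* Main.v *)
Require Import Defs.
From HB Require Import structures.
From mathcomp Require Import all_boot all_order all_algebra.
From mathcomp Require Import reals.
From mathcomp Require Import ring lra.
Set Implicit Arguments. Unset Strict Implicit. Unset Printing Implicit Defensive.
Import Order.TTheory GRing.Theory Num.Theory.
Local Open Scope ring_scope.

Section Aux.
Variable R : realType.
Implicit Types (m n d : nat).

Definition ip (m n : nat) (A B : 'M[R]_(m, n)) : R :=
  \sum_(i < m) \sum_(j < n) A i j * B i j.
Definition fr2 (m n : nat) (A : 'M[R]_(m, n)) : R := ip A A.

Lemma ipE m n (A B : 'M[R]_(m, n)) : ip A B = \tr (A^T *m B).
Proof.
rewrite /ip /mxtrace exchange_big /=; apply: eq_bigr => j _.
rewrite !mxE; apply: eq_bigr => i _; by rewrite !mxE.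
Qed.

Lemma ipC m n (A B : 'M[R]_(m, n)) : ip A B = ip B A.
Proof. by apply: eq_bigr => i _; apply: eq_bigr => j _; rewrite mulrC. Qed.

Lemma fr2_ge0 m n (A : 'M[R]_(m, n)) : 0 <= fr2 A.
Proof. by apply: sumr_ge0 => i _; apply: sumr_ge0 => j _; rewrite -expr2 sqr_ge0. Qed.

Lemma frobE m n (A : 'M[R]_(m, n)) : frob A = Num.sqrt (fr2 A).
Proof. by rewrite /frob /fr2 /ip; congr Num.sqrt; do 2 (apply: eq_bigr => ? _); rewrite expr2. Qed.

Lemma fr2_eq0 m n (A : 'M[R]_(m, n)) : fr2 A = 0 -> A = 0.
Proof.
move=> /eqP; rewrite psumr_eq0; last by move=> i _; apply: sumr_ge0 => j _; rewrite -expr2 sqr_ge0.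
move=> /allP H; apply/matrixP => i j; rewrite mxE.
have := H i (mem_index_enum _); rewrite /= psumr_eq0; last by move=> k _; rewrite -expr2 sqr_ge0.
by move=> /allP /(_ j (mem_index_enum _)) /=; rewrite mulf_eq0 orbb => /eqP.
Qed.

Lemma fr2_lin m n (x y : R) (A B : 'M[R]_(m, n)) :
  fr2 (x *: A + y *: B) = x ^+ 2 * fr2 A + 2 * x * y * ip A B + y ^+ 2 * fr2 B.
Proof.
rewrite /fr2 /ip !mulr_sumr -!big_split /=; apply: eq_bigr => i _.
rewrite !mulr_sumr -!big_split /=; apply: eq_bigr => j _.
rewrite !mxE; ring.
Qed.

Lemma CS m n (A B : 'M[R]_(m, n)) : ip A B <= Num.sqrt (fr2 A) * Num.sqrt (fr2 B).
Proof.
set al := Num.sqrt (fr2 A); set be := Num.sqrt (fr2 B).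
have hA : al ^+ 2 = fr2 A by rewrite sqr_sqrtr // fr2_ge0.
have hB : be ^+ 2 = fr2 B by rewrite sqr_sqrtr // fr2_ge0.
have h0 := fr2_ge0 (be *: A + (- al) *: B).
rewrite fr2_lin -hA -hB in h0.
have ha : 0 <= al by apply: sqrtr_ge0.
have hb : 0 <= be by apply: sqrtr_ge0.
have [al0|alp] := eqVneq al 0.
  have : fr2 A = 0 by rewrite -hA al0 expr0n.
  move=> /fr2_eq0 ->; rewrite /ip big1 ?al0 ?mul0r // => i _; rewrite big1 // => j _; by rewrite mxE mul0r.
have [be0|bep] := eqVneq be 0.
  have : fr2 B = 0 by rewrite -hB be0 expr0n.
  move=> /fr2_eq0 ->; rewrite /ip big1 ?be0 ?mulr0 // => i _; rewrite big1 // => j _; by rewrite mxE mulr0.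
have hab : 0 < al * be by rewrite mulr_gt0 // lt_def ?alp ?bep.
have : al * be * ip A B <= al * be * (al * be) by nra.
by rewrite ler_pM2l.
Qed.

Lemma frob_triangle m n (A B : 'M[R]_(m, n)) : frob (A + B) <= frob A + frob B.
Proof.
rewrite !frobE -ler_sqr ?nnegrE ?addr_ge0 ?sqrtr_ge0 //.
rewrite sqrrD !sqr_sqrtr ?fr2_ge0 //.
have := fr2_lin 1 1 A B; rewrite !scale1r => ->.
have := CS A B.
rewrite !expr1n !mul1r mulr1 mulr2n; lra.
Qed.


Lemma fr2_tr m n (A : 'M[R]_(m, n)) : fr2 A = \tr (A^T *m A).
Proof. exact: ipE. Qed.

Lemma proj_id m n j (Q : 'M[R]_(m, j)) (E : 'M[R]_(m, n)) :
  Q^T *m Q = 1%:M -> fr2 ((1%:M - Q *m Q^T) *m E) = fr2 E - fr2 (Q^T *m E).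
Proof.
move=> HQ; rewrite !fr2_tr.
have PP : Q *m Q^T *m (Q *m Q^T) = Q *m Q^T by rewrite mulmxA -(mulmxA Q) HQ mulmx1.
have PT : (1%:M - Q *m Q^T)^T = 1%:M - Q *m Q^T by rewrite linearB /= trmx1 trmx_mul trmxK.
rewrite !trmx_mul PT trmxK.
have I2 : (1%:M - Q *m Q^T) *m (1%:M - Q *m Q^T) = 1%:M - Q *m Q^T :> 'M_m.
  by rewrite mulmxBl mul1mx mulmxBr mulmx1 PP subrr subr0.
rewrite !mulmxA -(mulmxA E^T (1%:M - _) (1%:M - _)) I2 mulmxBr mulmxBl mulmx1 !mulmxA.
by rewrite linearB.
Qed.

Lemma fr2_orthL m k n (U : 'M[R]_(k, m)) (Z : 'M[R]_(m, n)) :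
  U^T *m U = 1%:M -> fr2 (U *m Z) = fr2 Z.
Proof. by move=> HU; rewrite !fr2_tr trmx_mul mulmxA -(mulmxA Z^T) HU mulmx1. Qed.

Lemma fr2_orthR m k n (Z : 'M[R]_(m, n)) (V : 'M[R]_(k, n)) :
  V^T *m V = 1%:M -> fr2 (Z *m V^T) = fr2 Z.
Proof.
move=> HV; rewrite !fr2_tr trmx_mul trmxK mulmxA mxtrace_mulC !mulmxA HV mul1mx.
by [].
Qed.

Lemma fr2_col m1 m2 n (U : 'M[R]_(m1, n)) (D : 'M[R]_(m2, n)) :
  fr2 (col_mx U D) = fr2 U + fr2 D.
Proof. by rewrite !fr2_tr tr_col_mx mul_row_col mxtraceD. Qed.

Lemma tr_cv k (u v : 'cV[R]_k) : u^T *m v = (ip u v)%:M.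
Proof.
rewrite [LHS]mx11_scalar; congr (_%:M); rewrite mxE /ip; apply: eq_bigr => i _.
by rewrite big_ord1 mxE.
Qed.


Section House.
Variable j : nat.
Variable x : 'cV[R]_(j.+1).
Let nx := Num.sqrt (fr2 x).
Let y := nx^-1 *: x.
Let e1 : 'cV[R]_(j.+1) := delta_mx 0 0.
Let w := e1 - y.
Let c := 2 / fr2 w.
Definition hh : 'M[R]_(j.+1) := 1%:M - c *: (w *m w^T).

Lemma hh_sym : hh^T = hh.
Proof. by rewrite /hh linearB /= trmx1 linearZ /= trmx_mul trmxK. Qed.

Lemma hh_inv : hh *m hh = 1%:M.
Proof.
have WW : w *m w^T *m (w *m w^T) = fr2 w *: (w *m w^T).
  by rewrite mulmxA -(mulmxA w) tr_cv mul_mx_scalar scalemxAl.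
rewrite /hh mulmxBl mul1mx mulmxBr mulmx1 -scalemxAl -scalemxAr scalerA WW scalerA.
have [s0|sn0] := eqVneq (fr2 w) 0.
  have c0 : c = 0 by rewrite /c s0 invr0 mulr0.
  by rewrite c0 !mul0r !scale0r !subr0.
have -> : c * c * fr2 w = 2 * c by rewrite /c; field.
apply/matrixP => i k; rewrite !mxE; ring.
Qed.

Lemma hh_x : exists al, hh *m x = al *: e1.
Proof.
have [x0|xn0] := eqVneq x 0; first by exists 0; rewrite x0 mulmx0 scale0r.
have fx : 0 < fr2 x.
  rewrite lt_def fr2_ge0 andbT; apply/eqP => /fr2_eq0 h; by rewrite h eqxx in xn0.
have nxp : 0 < nx by rewrite sqrtr_gt0.
have fy : fr2 y = 1.
  rewrite /y.
  have := fr2_lin (nx^-1) 0 x x; rewrite scale0r addr0 => ->.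
  rewrite expr0n /= !mulr0 mul0r !addr0.
  rewrite -[fr2 x](@sqr_sqrtr _ (fr2 x)) ?fr2_ge0 // -/nx exprVn mulVf //.
  by rewrite expf_neq0 // gt_eqF.
have xE : x = nx *: y by rewrite /y scalerA divff ?gt_eqF // scale1r.
exists nx; rewrite xE -scalemxAr; congr (_ *: _).
have fe : fr2 e1 = 1.
  rewrite /fr2 /ip (bigD1 0) //= big_ord1 big1 ?addr0 ?mxE ?mulr1 //.
  by move=> i /negbTE hi; rewrite big_ord1 !mxE hi mul0r.
have fw : fr2 w = fr2 e1 + 2 * (- 1) * ip e1 y + fr2 y.
  have := fr2_lin 1 (-1) e1 y; rewrite scale1r scaleN1r sqrrN !expr1n !mul1r mulr1.
  by rewrite /w => ->.
have [s0|sn0] := eqVneq (fr2 w) 0.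
  have : w = 0 by apply: fr2_eq0.
  move=> /eqP; rewrite subr_eq0 => /eqP <-.
  by rewrite /hh /c s0 invr0 mulr0 scale0r subr0 mul1mx.
rewrite /hh mulmxBl mul1mx -scalemxAl -mulmxA tr_cv mul_mx_scalar scalerA.
have ipw : ip w y = ip e1 y - 1.
  rewrite -fy /w /ip /fr2 /ip -sumrB; apply: eq_bigr => i _; rewrite -sumrB.
  by apply: eq_bigr => k _; rewrite !mxE mulrBl.
have -> : c * ip w y = -1.
  rewrite /c ipw; move: sn0; rewrite fw fe fy => sn0; field.
  by move: sn0; apply: contra => /eqP h; apply/eqP; rewrite -h; ring.
by rewrite scaleN1r opprK /w addrC subrK.
Qed.

End House.


Lemma argmin_fr2 m d n (A : 'M[R]_(m, n)) (X : 'M[R]_(d, n)) (ab a' : 'cV[R]_d) (bb b' : 'cV[R]_m) :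
  rank1_argmin A X ab bb -> fr2 (A - bb *m ab^T *m X) <= fr2 (A - b' *m a'^T *m X).
Proof.
move=> /(_ a' b'); rewrite !frobE !sqr_sqrtr ?fr2_ge0 // ler_pM2l //.
by rewrite invr_gt0 ltr0n.
Qed.

Lemma step m d n j (A : 'M[R]_(m, n)) (W : 'M[R]_(m, d)) (X : 'M[R]_(d, n))
  (ab : 'cV[R]_d) (bb : 'cV[R]_m) (Q : 'M[R]_(m, j.+1)) :
  A = W *m X -> rank1_argmin A X ab bb -> Q^T *m Q = 1%:M ->
  exists Q' : 'M[R]_(m, j), Q'^T *m Q' = 1%:M /\
    fr2 ((1%:M - Q' *m Q'^T) *m (A - bb *m ab^T *m X))
      <= fr2 ((1%:M - Q *m Q^T) *m A).
Proof.
move=> AE Hmin HQ.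
set H := hh (Q^T *m bb).
have HH : H^T *m H = 1%:M by rewrite hh_sym hh_inv.
set QH : 'M[R]_(m, 1 + j) := Q *m H.
have QHo : QH^T *m QH = 1%:M.
  by rewrite /QH trmx_mul mulmxA -(mulmxA H^T) HQ mulmx1 HH.
set q1 := lsubmx QH; set Q' := rsubmx QH.
have QHE : QH = row_mx q1 Q' by rewrite hsubmxK.
have blk : block_mx (q1^T *m q1) (q1^T *m Q') (Q'^T *m q1) (Q'^T *m Q')
    = block_mx 1%:M 0 0 1%:M.
  by rewrite -mul_col_row -tr_row_mx -QHE QHo -scalar_mx_block.
have [q1o _ _ Q'o] := eq_block_mx blk.
exists Q'; split => //.
have [al Hal] := hh_x (Q^T *m bb).
have colE : forall Z : 'M[R]_(m, n), QH^T *m Z = col_mx (q1^T *m Z) (Q'^T *m Z).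
  by move=> Z; rewrite QHE tr_row_mx mul_col_mx.
have Q'b : Q'^T *m bb = 0.
  have : QH^T *m bb = col_mx (q1^T *m bb) (Q'^T *m bb).
    by rewrite QHE tr_row_mx mul_col_mx.
  rewrite /QH trmx_mul -mulmxA hh_sym -/H Hal => /(congr1 dsubmx).
  rewrite col_mxKd => <-; apply/matrixP => i k; rewrite !mxE.
  by rewrite (_ : rshift 1 i == 0 = false) ?mulr0 //.
rewrite !proj_id //.
have -> : Q'^T *m (A - bb *m ab^T *m X) = Q'^T *m A.
  by rewrite mulmxBr !mulmxA Q'b !mul0mx subr0.
have -> : fr2 (Q^T *m A) = fr2 (q1^T *m A) + fr2 (Q'^T *m A).
  rewrite -fr2_col -colE /QH trmx_mul -mulmxA [RHS]fr2_orthL //.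
  by rewrite trmxK hh_sym hh_inv.
have := argmin_fr2 (W^T *m q1) q1 Hmin.
have -> : q1 *m (W^T *m q1)^T *m X = q1 *m q1^T *m A.
  by rewrite trmx_mul trmxK AE !mulmxA.
have -> : A - q1 *m q1^T *m A = (1%:M - q1 *m q1^T) *m A by rewrite mulmxBl mul1mx.
rewrite proj_id //; lra.
Qed.


Lemma sum_delta k (c : R) (i : nat) :
  \sum_(l < k) (if (l : nat) == i then c else 0) = if (i < k)%N then c else 0.
Proof.
case: ltnP => hi.
  rewrite (bigD1 (Ordinal hi)) //= eqxx big1 ?addr0 // => l hl; rewrite ifF //.
  by apply: contraNF hl => /eqP h; apply/eqP/val_inj.
rewrite big1 // => l _; rewrite ifF //; apply/negbTE; rewrite neq_ltn.
by rewrite (leq_trans (ltn_ord l) hi).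
Qed.

Lemma sum_delta_sq k (F : 'I_k -> R) (i : nat) :
  (\sum_(l < k) (if (l : nat) == i then F l else 0)) ^+ 2
  = \sum_(l < k) (if (l : nat) == i then F l ^+ 2 else 0).
Proof.
case: (ltnP i k) => hi.
  rewrite (bigD1 (Ordinal hi)) //= eqxx big1 ?addr0; last first.
    by move=> l hl; rewrite ifF //; apply: contraNF hl => /eqP h; apply/eqP/val_inj.
  rewrite (bigD1 (Ordinal hi)) //= eqxx big1 ?addr0 //.
  by move=> l hl; rewrite ifF //; apply: contraNF hl => /eqP h; apply/eqP/val_inj.
rewrite !big1 ?expr0n // => l _; rewrite ifF //; apply/negbTE; rewrite neq_ltn;
  by rewrite (leq_trans (ltn_ord l) hi).
Qed.

Definition dg k l (s : nat -> R) : 'M[R]_(k, l) :=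
  \matrix_(i < k, j < l) (if (i : nat) == j then s i.+1 else 0).

Lemma fr2_mul_dg m k l (G : 'M[R]_(m, k)) (s : nat -> R) (c : R) :
  (forall i, 0 <= s i.+1 <= c) -> fr2 (G *m dg k l s) <= c ^+ 2 * fr2 G.
Proof.
move=> hs.
have E : forall i j, (G *m dg k l s) i j
   = \sum_(t < k) (if (t : nat) == j then G i t * s t.+1 else 0).
  move=> i j; rewrite mxE; apply: eq_bigr => t _; rewrite mxE.
  by case: eqP; rewrite ?mulr0.
rewrite /fr2 /ip mulr_sumr; apply: ler_sum => i _.
under eq_bigr => j _ do rewrite E -expr2 sum_delta_sq.
rewrite exchange_big /= mulr_sumr; apply: ler_sum => t _.
under eq_bigr => j _ do rewrite eq_sym.
rewrite sum_delta.
have [h0 h1] := andP (hs t).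
have hsq : (G i t * s t.+1) ^+ 2 <= c ^+ 2 * (G i t * G i t).
  rewrite exprMn mulrC -expr2 ler_wpM2r ?sqr_ge0 // ler_sqr ?nnegrE //.
  exact: le_trans h1.
case: ifP => // _; apply: mulr_ge0; first exact: sqr_ge0.
by rewrite -expr2 sqr_ge0.
Qed.


Lemma svals_mono m n (Y : 'M[R]_(m, n)) s : svals Y s ->
  forall i k, s (i.+1 + k)%N <= s i.+1.
Proof.
case=> [U [V [_ [_ hm _]]]] i; elim=> [|k IH]; first by rewrite addn0.
by rewrite addnS (le_trans (hm _)) // -addSn.
Qed.

Lemma svals_ge0 m n (Y : 'M[R]_(m, n)) s : svals Y s -> forall i, 0 <= s i.+1.
Proof. by case=> [U [V [_ [h0 _ _]]]]. Qed.

Lemma frob_mulX m d n (Z : 'M[R]_(m, d)) (X : 'M[R]_(d, n)) sX :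
  svals X sX -> frob (Z *m X) <= sX 1%N * frob Z.
Proof.
move=> hsv; have hmono := svals_mono hsv; have hge := svals_ge0 hsv.
case: hsv => [U [V [[hU hV hX] _]]].
have hUU : U *m U^T = 1%:M by apply: mulmx1C.
have le1 : fr2 (Z *m X) <= sX 1%N ^+ 2 * fr2 Z.
  rewrite hX !mulmxA fr2_orthR //.
  have -> : fr2 Z = fr2 (Z *m U) by rewrite -[U]trmxK fr2_orthR // trmxK.
  apply: fr2_mul_dg => i; rewrite hge /=.
  by have := hmono 0%N i; rewrite add1n.
rewrite !frobE -(@ger0_norm _ (sX 1%N)) ?hge // -sqrtr_sqr -sqrtrM ?sqr_ge0 //.
by rewrite ler_sqrt // mulr_ge0 ?sqr_ge0 ?fr2_ge0.
Qed.

Lemma residE m d n (Y : 'M[R]_(m, n)) (X : 'M[R]_(d, n)) a b k :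
  resid Y X a b k = Y - \sum_(1 <= i < k.+1) b i *m (a i)^T *m X.
Proof.
elim: k => [|k IH] /=; first by rewrite big_geq // subr0.
by rewrite IH [in RHS]big_nat_recr //= opprD addrA.
Qed.

Definition sel k l : 'M[R]_(k, l) := \matrix_(i < k, j < l) ((i : nat) == j)%:R.

Lemma selL k m n s : (k <= m)%N -> sel k m *m dg m n s = dg k n s.
Proof.
move=> hk; apply/matrixP => i j; rewrite !mxE.
under eq_bigr => l _ do rewrite !mxE.
have -> : \sum_(l < m) ((i : nat) == l)%:R * (if (l : nat) == j then s l.+1 else 0)
   = \sum_(l < m) (if (l : nat) == i then (if (i : nat) == j then s i.+1 else 0) else 0).
  apply: eq_bigr => l _; rewrite eq_sym; case: eqP => [->|]; rewrite ?mul1r ?mul0r //.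
by rewrite sum_delta (leq_trans (ltn_ord i) hk).
Qed.

Lemma selR k m n s : (k <= n)%N -> dg m n s *m sel n k = dg m k s.
Proof.
move=> hk; apply/matrixP => i j; rewrite !mxE.
under eq_bigr => l _ do rewrite !mxE.
have -> : \sum_(l < n) (if (i : nat) == l then s i.+1 else 0) * ((l : nat) == j)%:R
   = \sum_(l < n) (if (l : nat) == j then (if (i : nat) == j then s i.+1 else 0) else 0).
  apply: eq_bigr => l _; case: (eqVneq (l : nat) j) => [->|hl]; rewrite ?mulr1 ?mulr0 //.
by rewrite sum_delta (leq_trans (ltn_ord j) hk).
Qed.

Lemma fr2_dg k n s : fr2 (dg k n s) = \sum_(i < k) (if (i < n)%N then s i.+1 ^+ 2 else 0).
Proof.
rewrite /fr2 /ip; apply: eq_bigr => i _; rewrite -sum_delta; apply: eq_bigr => j _.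
by rewrite !mxE eq_sym; case: ifP; rewrite ?mulr0 // expr2.
Qed.

Lemma sum_sq_le (F : nat -> R) a b : (forall i, 0 <= F i) ->
  \sum_(a <= i < b) F i ^+ 2 <= (\sum_(a <= i < b) F i) ^+ 2.
Proof.
move=> h0; elim: b => [|b IH]; first by rewrite !big_geq // expr0n.
case: (leqP a b) => hab; last by rewrite !big_geq // expr0n.
rewrite !big_nat_recr //= sqrrD.
have : 0 <= \sum_(a <= i < b) F i by apply: sumr_ge0.
have := h0 b; nra.
Qed.


Lemma svals_zero m n (Y : 'M[R]_(m, n)) s :
  svals Y s -> forall k, (\rank Y < k)%N -> s k = 0.
Proof.
move=> hsv; have hmono := svals_mono hsv; have hge := svals_ge0 hsv.
set p := \rank Y.
suff hp : s p.+1 = 0.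
  move=> k hk; apply/eqP; rewrite eq_le; apply/andP; split; last first.
    by case: k hk => // k _; exact: hge.
  have -> : k = (p.+1 + (k - p.+1))%N by rewrite subnKC.
  by rewrite -hp hmono.
apply/eqP; apply: contraT => hne.
have hpos : 0 < s p.+1 by rewrite lt_def hne hge.
case: hsv => [U [V [[hU hV hY] [_ _ hz]]]].
have hmn : (p.+1 <= minn m n)%N.
  by rewrite leqNgt; apply/negP => /hz h; rewrite h eqxx in hne.
have hm : (p.+1 <= m)%N by rewrite (leq_trans hmn) // geq_minl.
have hn : (p.+1 <= n)%N by rewrite (leq_trans hmn) // geq_minr.
set D := dg m n s.
have DE : D = U^T *m Y *m V.
  by rewrite hY /D !mulmxA hU mul1mx -mulmxA hV mulmx1.
have TDS : sel p.+1 m *m D *m sel n p.+1 = diag_mx (\row_(i < p.+1) s i.+1).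
  rewrite selL // selR //; apply/matrixP => i j; rewrite !mxE.
  by case: (eqVneq i j) => [->|hij]; rewrite ?eqxx ?mulr1n // ifF ?mulr0n //; apply/negbTE.
have hunit : diag_mx (\row_(i < p.+1) s i.+1) \in unitmx.
  rewrite unitmxE det_diag unitfE; apply/prodf_neq0 => i _; rewrite mxE gt_eqF //.
  apply: lt_le_trans hpos _.
  by have := hmono i (p - i)%N; rewrite addSn subnKC // -ltnS.
have := mxrank_unit hunit; rewrite -TDS => hr.
have : (p.+1 <= p)%N.
  rewrite -{1}hr (leq_trans (mxrankM_maxl _ _)) // (leq_trans (mxrankM_maxr _ _)) //.
  by rewrite DE (leq_trans (mxrankM_maxl _ _)) // mxrankM_maxr.
by rewrite ltnn.
Qed.

Lemma tail_bound m n (Y : 'M[R]_(m, n)) s r :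
  svals Y s -> (r <= \rank Y)%N ->
  exists Q : 'M[R]_(m, r), Q^T *m Q = 1%:M /\
    frob ((1%:M - Q *m Q^T) *m Y) <= \sum_(r.+1 <= k < (\rank Y).+1) s k.
Proof.
move=> hsv hr; have hz := svals_zero hsv; have hge := svals_ge0 hsv.
set p := \rank Y in hr hz *.
have hpm : (p <= m)%N by apply: rank_leq_row.
have hrm : (r <= m)%N by apply: leq_trans hpm.
case: hsv => [U [V [[hU hV hY] _]]].
have StS : (sel m r)^T = sel r m.
  by apply/matrixP => i j; rewrite !mxE eq_sym.
have So : (sel m r)^T *m sel m r = 1%:M.
  apply/matrixP => i j; rewrite StS !mxE.
  under eq_bigr => l _ do rewrite !mxE.
  have -> : \sum_(l < m) ((i : nat) == l)%:R * ((l : nat) == j)%:R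
     = \sum_(l < m) (if (l : nat) == i then ((i : nat) == j)%:R else 0 :> R).
    by apply: eq_bigr => l _; rewrite eq_sym; case: eqP => [->|]; rewrite ?mul1r ?mul0r.
  by rewrite sum_delta (leq_trans (ltn_ord i) hrm).
exists (U *m sel m r); split.
  by rewrite trmx_mul mulmxA -(mulmxA _ U^T) hU mulmx1 So.
rewrite frobE.
have -> : fr2 ((1%:M - U *m sel m r *m (U *m sel m r)^T) *m Y)
    = \sum_(r <= i < m) (if (i < n)%N then s i.+1 ^+ 2 else 0).
  rewrite proj_id; last by rewrite trmx_mul mulmxA -(mulmxA _ U^T) hU mulmx1 So.
  have -> : fr2 Y = fr2 (dg m n s) by rewrite hY fr2_orthR // fr2_orthL.
  have -> : fr2 ((U *m sel m r)^T *m Y) = fr2 (dg r n s).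
    rewrite hY trmx_mul !mulmxA -(mulmxA _ U^T) hU mulmx1 fr2_orthR // StS.
    by rewrite selL.
  rewrite !fr2_dg -!(big_mkord xpredT (fun i => if (i < n)%N then s i.+1 ^+ 2 else 0)).
  by rewrite (@big_cat_nat _ _ _ r) //= addrC addrK.
have hsum0 : 0 <= \sum_(r.+1 <= k < p.+1) s k.
  by rewrite big_seq; apply: sumr_ge0 => k; rewrite mem_index_iota => /andP [hk _]; case: k hk => // k _; apply: hge.
rewrite -(ger0_norm hsum0) -sqrtr_sqr ler_sqrt ?sqr_ge0 //.
rewrite (@big_cat_nat _ _ _ p) //= [X in _ + X]big1_seq ?addr0; last first.
  move=> i /andP [_]; rewrite mem_index_iota => /andP [hi _].
  by rewrite hz ?ltnS // expr0n /= if_same.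
apply: (le_trans (y := \sum_(r <= i < p) s i.+1 ^+ 2)).
  apply: ler_sum => i _; case: ifP => // _; exact: sqr_ge0.
have -> : \sum_(r.+1 <= k < p.+1) s k = \sum_(r <= i < p) s i.+1.
  rewrite -(addn1 r) big_addn subn1 /=; apply: eq_bigr => i _; by rewrite addn1.
exact: sum_sq_le.
Qed.


Lemma frob_proj_le m n j (Q : 'M[R]_(m, j)) (Z : 'M[R]_(m, n)) :
  Q^T *m Q = 1%:M -> frob ((1%:M - Q *m Q^T) *m Z) <= frob Z.
Proof.
move=> hQ; rewrite !frobE ler_sqrt ?fr2_ge0 // proj_id //.
by rewrite lerBlDr lerDl fr2_ge0.
Qed.

Lemma frobN m n (Z : 'M[R]_(m, n)) : frob (- Z) = frob Z.
Proof.
rewrite !frobE; congr Num.sqrt; rewrite /fr2 /ip; apply: eq_bigr => i _.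
by apply: eq_bigr => k _; rewrite !mxE mulrNN.
Qed.

End Aux.

Theorem theorem1 (R : realType) (m d n : nat)
  (X : 'M[R]_(d, n)) (Wstar : 'M[R]_(m, d))
  (sig : nat -> R) (sX : nat -> R) (p r : nat)
  (a abar : nat -> 'cV[R]_d) (b bbar : nat -> 'cV[R]_m) :
  svals (Wstar *m X) sig ->
  svals X sX ->
  p = \rank (Wstar *m X) ->
  (1 <= r)%N -> (r <= p)%N ->
  (forall k, (1 <= k <= r)%N ->
     rank1_argmin (resid (Wstar *m X) X a b k.-1) X (abar k) (bbar k)) ->
  (forall k, (1 <= k <= r)%N -> 0 < delta_norm a abar b bbar k) ->
  (forall k j, (1 <= k <= r)%N -> (k < j <= p)%N ->
     sX 1%N * err_sum (delta_norm a abar b bbar) sig (Tstar sig p k) k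
       < 2^-1 * `|sig k - sig j|) ->
  frob (Wstar *m X - \sum_(1 <= k < r.+1) b k *m (a k)^T *m X)
    <= \sum_(r.+1 <= k < p.+1) sig k
       + sX 1%N * \sum_(1 <= k < r.+1)
           err_sum (delta_norm a abar b bbar) sig (Tstar sig p k) k.+1.

Proof.
move=> hsv hsX hp hr1 hrp hmin hpos _.
set Y := Wstar *m X.
set dn := delta_norm a abar b bbar.
set tail := \sum_(r.+1 <= k < p.+1) sig k.
have sX0 : 0 <= sX 1%N by apply: (svals_ge0 hsX 0).
have inv : forall i, (i <= r)%N -> forall j, (i + j)%N = r ->
  exists Q : 'M[R]_(m, j), Q^T *m Q = 1%:M /\
    frob ((1%:M - Q *m Q^T) *m resid Y X a b i)
      <= tail + \sum_(1 <= k < i.+1) sX 1%N * dn k.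
  elim=> [|i IH] hi j hij.
    rewrite add0n in hij; subst j.
    have hr' : (r <= \rank Y)%N by rewrite -hp.
    have [Q [hQ hb]] := tail_bound hsv hr'.
    exists Q; split => //; rewrite big_geq // addr0 /= /tail hp; exact: hb.
  have hij' : (i + j.+1)%N = r by rewrite addnS -addSn.
  have [Q [hQ hb]] := IH (ltnW hi) j.+1 hij'.
  set W := Wstar - \sum_(1 <= k < i.+1) b k *m (a k)^T.
  have AE : resid Y X a b i = W *m X.
    by rewrite residE /W mulmxBl mulmx_suml.
  have hm : rank1_argmin (resid Y X a b i) X (abar i.+1) (bbar i.+1).
    by have := hmin i.+1; rewrite hi /=; apply.
  have [Q' [hQ' hst]] := step AE hm hQ.
  exists Q'; split => //.
  set A := resid Y X a b i.
  have -> : resid Y X a b i.+1 = (A - bbar i.+1 *m (abar i.+1)^T *m X)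
      + (- (b i.+1 *m (a i.+1)^T - bbar i.+1 *m (abar i.+1)^T)) *m X.
    by rewrite /= -/A mulNmx mulmxBl opprB addrA subrK.
  rewrite mulmxDr (le_trans (frob_triangle _ _)) //.
  rewrite big_nat_recr //= addrA lerD //.
    apply: (le_trans _ hb); rewrite !frobE ler_sqrt ?fr2_ge0 //.
  apply: (le_trans (frob_proj_le _ hQ')); apply: (le_trans (frob_mulX _ hsX)).
  by rewrite frobN /dn /delta_norm.
have [Q [hQ hb]] := inv r (leqnn r) 0%N (addn0 r).
have Q0 : Q *m Q^T = 0 by apply/matrixP => i k; rewrite !mxE big_ord0.
move: hb; rewrite Q0 subr0 mul1mx residE => hb.
apply: (le_trans hb); rewrite lerD2l -mulr_sumr.
rewrite big_seq [X in _ <= _ * X]big_seq.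
apply: ler_wpM2l => //; apply: ler_sum => k; rewrite mem_index_iota => /andP [hk1 hkr].
have dn0 : forall k', 0 <= dn k'.
  by move=> k'; rewrite /dn /delta_norm; case: ifP => // _; rewrite frobE sqrtr_ge0.
have T0 : 0 <= Tstar sig p k.
  have sk : 0 <= sig k by case: k hk1 hkr => // k _ _; exact: (svals_ge0 hsv k).
  rewrite /Tstar; apply: (big_ind (fun x => 0 <= x)) => //.
  by move=> x y hx hy; rewrite le_min hx hy.
rewrite /err_sum big_nat_recr //= [X in _ * X]big_geq // mulr1 lerDr.
rewrite big_seq; apply: sumr_ge0 => k'; rewrite mem_index_iota => /andP [_ hk'].
apply: mulr_ge0 => //; rewrite big_seq; apply: prodr_ge0 => j.
rewrite mem_index_iota => /andP [hj _].
have sj : 0 <= sig j by case: j hj => // j _; apply: (svals_ge0 hsv).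
by apply: addr_ge0 => //; apply: mulr_ge0 => //; [apply: mulr_ge0 | rewrite invr_ge0].
Qed.
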